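(* Suppose that $\Re s=1$, $u\ge1$, and $|s|>u$. For integers $\nu\ge1$, \[ \left|\frac{\partial^{\nu}}{\partial u^{\nu}}G(u,s)\right|\ll_{\nu}\frac{|s|^{\nu-1}}{u^{2\nu-1}}, \] with implied constant depending only on $\nu$.
   Context: $G(u,s):=\int_{0}^{1/u}\frac{1-e^{-ts}}{t}\,dt$. *)

(* Defs.v *)
From Stdlib Require Import Reals.
From Coquelicot Require Import Coquelicot.
Open Scope R_scope.

(* G(u,s) = \int_0^{1/u} (1 - e^{-ts})/t dt for complex s = a + i b, split into
   real and imaginary parts using e^{-ts} = e^{-ta}(cos(tb) - i sin(tb)):
   1 - e^{-ts} = (1 - e^{-ta} cos(tb)) + i e^{-ta} sin(tb). *)
Definition G_re (u : R) (s : C) : R :=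
  RInt (fun t => (1 - exp (- (t * Re s)) * cos (t * Im s)) / t) 0 (1 / u).

Definition G_im (u : R) (s : C) : R :=
  RInt (fun t => exp (- (t * Re s)) * sin (t * Im s) / t) 0 (1 / u).

Definition G (u : R) (s : C) : C := (G_re u s, G_im u s).

Definition dG (nu : nat) (u : R) (s : C) : C :=
  (Derive_n (fun v => G_re v s) nu u, Derive_n (fun v => G_im v s) nu u).

(* Main.v *)
Require Import Defs.
From Stdlib Require Import Reals Lra Lia List.
From Coquelicot Require Import Coquelicot.
Open Scope R_scope.

Section Quot.
Variable phi : R -> R.
Hypothesis Hd : forall t, ex_derive phi t.
Hypothesis H0 : phi 0 = 0.

Definition gq (t : R) : R := if Req_EM_T t 0 then Derive phi 0 else phi t / t.

Lemma gq_cont : forall t, continuous gq t.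
Proof.
intros t. destruct (Req_EM_T t 0) as [->|Ht].
- apply continuity_pt_filterlim.
  assert (Hl : derivable_pt_lim phi 0 (Derive phi 0)).
  { apply is_derive_Reals. apply Derive_correct. apply Hd. }
  intros eps Heps. destruct (Hl eps Heps) as [d Hdl].
  exists d. split. apply cond_pos.
  intros x [[_ Hx0] Hx]. unfold gq. simpl in *. unfold R_dist in *.
  destruct (Req_EM_T x 0) as [e|_]; [exfalso; auto|].
  destruct (Req_EM_T 0 0) as [_|n]; [|exfalso; auto].
  specialize (Hdl x (not_eq_sym Hx0)). rewrite Rminus_0_r in Hx.
  specialize (Hdl Hx). rewrite Rplus_0_l, H0, Rminus_0_r in Hdl. exact Hdl.
- apply continuous_ext_loc with (fun y => phi y / y).
  + assert (Hp : 0 < Rabs t) by (apply Rabs_pos_lt; auto).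
    exists (mkposreal _ Hp). intros y Hy. unfold gq.
    destruct (Req_EM_T y 0) as [->|_]; [|reflexivity].
    exfalso. unfold ball in Hy; simpl in Hy. unfold AbsRing_ball, abs, minus, plus, opp in Hy; simpl in Hy.
    rewrite Rplus_0_l, Rabs_Ropp in Hy. lra.
  + exact (@continuous_mult R_UniformSpace R_AbsRing phi Rinv t (ex_derive_continuous _ _ (Hd t)) (continuous_Rinv t Ht)).
Qed.

Lemma RInt_gq : forall w, RInt (fun t => phi t / t) 0 w = RInt gq 0 w.
Proof.
intros w. apply RInt_ext. intros x Hx. unfold gq.
destruct (Req_EM_T x 0) as [->|_]; [|reflexivity].
exfalso. unfold Rmin, Rmax in Hx. destruct (Rle_dec 0 w); lra.
Qed.

Lemma Derive_Gpart : forall v, v <> 0 ->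
  Derive (fun v => RInt (fun t => phi t / t) 0 (1 / v)) v = - (phi (1/v) / v).
Proof.
intros v Hv.
rewrite (Derive_ext _ (fun v => RInt gq 0 (1/v))) by (intros; apply RInt_gq).
apply is_derive_unique.
set (dd := -(1/(v*v))).
assert (Hg : is_derive (fun v => 1 / v) v dd).
{ unfold dd. auto_derive. exact Hv. field. exact Hv. }
assert (HF : is_derive (RInt gq 0) (1/v) (gq (1/v))).
{ apply (is_derive_RInt _ _ 0). 2: apply gq_cont.
  exists (mkposreal 1 Rlt_0_1). intros y _. apply RInt_correct.
  apply ex_RInt_continuous. intros; apply gq_cont. }
pose proof (is_derive_comp _ _ _ _ _ HF Hg) as HC.
replace (- (phi (1/v) / v)) with (scal dd (gq (1/v))). exact HC.
unfold dd, gq, scal; simpl. unfold mult; simpl.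
destruct (Req_EM_T (1/v) 0) as [e|_].
{ exfalso. unfold Rdiv in e. rewrite Rmult_1_l in e. apply Rinv_neq_0_compat in Hv. auto. }
field. auto.
Qed.
End Quot.

Record term := mkT { tc : R; tj : nat; ta : R; tb : R; tp : R }.
Definition tev (t : term) (v : R) : R :=
  tc t * (/ v) ^ (tj t) * exp (- (ta t * / v)) * sin (tb t * / v + tp t).
Definition Fev (L : list term) (v : R) : R :=
  fold_right (fun t acc => tev t v + acc) 0 L.
Definition Dt (t : term) : list term :=
  mkT (- (INR (tj t) * tc t)) (S (tj t)) (ta t) (tb t) (tp t)
  :: mkT (tc t * ta t) (S (S (tj t))) (ta t) (tb t) (tp t)
  :: mkT (- (tc t * tb t)) (S (S (tj t))) (ta t) (tb t) (tp t + PI/2) :: nil.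
Definition DL (L : list term) : list term := flat_map Dt L.

Lemma sin_PI2_shift x : sin (x + PI/2) = cos x.
Proof. rewrite sin_plus, sin_PI2, cos_PI2. ring. Qed.

Lemma tev_deriv t v : v <> 0 -> is_derive (tev t) v (Fev (Dt t) v).
Proof.
intros Hv. destruct t as [c j a b p]. unfold tev, Fev, Dt; simpl.
auto_derive. tauto.
unfold tev; simpl.
replace (b * / v + (p + PI / 2)) with ((b*/v+p) + PI/2) by ring.
rewrite sin_PI2_shift.
destruct j as [|j]. simpl. field. exact Hv.
rewrite S_INR. simpl pred. simpl. field. exact Hv.
Qed.

Lemma Fev_app L1 L2 v : Fev (L1 ++ L2) v = Fev L1 v + Fev L2 v.
Proof. induction L1; simpl. ring. unfold Fev in *; simpl. rewrite IHL1. ring. Qed.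

Lemma Fev_deriv L v : v <> 0 -> is_derive (Fev L) v (Fev (DL L) v).
Proof.
intros Hv. induction L as [|t L IH].
- unfold Fev; simpl. auto_derive; auto.
- change (DL (t :: L)) with (Dt t ++ DL L). rewrite Fev_app.
  change (Fev (t :: L)) with (fun v => tev t v + Fev L v).
  apply (is_derive_plus (tev t) (Fev L)). apply tev_deriv; auto. exact IH.
Qed.

Lemma Derive_n_Fev m L v : 0 < v -> Derive_n (Fev L) m v = Fev (Nat.iter m DL L) v.
Proof.
revert v. induction m as [|m IH]; intros v Hv; simpl. reflexivity.
rewrite (Derive_ext_loc _ (Fev (Nat.iter m DL L))).
- apply is_derive_unique. apply Fev_deriv. lra.
- exists (mkposreal v Hv). intros y Hy. apply IH.
  unfold ball in Hy; simpl in Hy. unfold AbsRing_ball, abs, minus, plus, opp in Hy; simpl in Hy.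
  apply Rabs_def2 in Hy. lra.
Qed.

Definition Inv (S : R) (m : nat) (L : list term) : Prop :=
  List.Forall (fun t => 0 <= ta t <= S /\ Rabs (tb t) <= S /\ (m + 1 <= tj t <= 2 * m + 1)%nat) L.

Definition wt (S : R) (m : nat) (L : list term) : R :=
  fold_right (fun t acc => Rabs (tc t) / S ^ (tj t - m - 1) + acc) 0 L.

Lemma Inv_D S m L : Inv S m L -> Inv S (Datatypes.S m) (DL L).
Proof.
intros H. induction H as [|t L Ht HL IH]. constructor.
change (DL (t::L)) with (Dt t ++ DL L). apply Forall_app; split; [|exact IH].
destruct Ht as [Ha [Hb Hj]].
unfold Dt; repeat apply Forall_cons; try apply Forall_nil; simpl; (repeat split; try lra; try lia).
Qed.

Lemma wt_app S m L1 L2 : wt S m (L1 ++ L2) = wt S m L1 + wt S m L2.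
Proof. induction L1; simpl. ring. unfold wt in *; simpl. rewrite IHL1. ring. Qed.

Lemma real_aux (P S a B C J M : R) : 0 < P -> 1 <= S -> 0 <= a <= S -> 0 <= B <= S ->
  0 <= C -> 0 <= J <= M ->
  J * C / P + (C * a / (S * P) + (C * B / (S * P) + 0)) <= (M + 2) * (C / P).
Proof.
intros HP HS Ha HB HC HJ.
set (X := C / P).
assert (HX : 0 <= X) by (unfold X; apply Rmult_le_pos; [lra| left; apply Rinv_0_lt_compat; lra]).
replace (J * C / P) with (J * X) by (unfold X; field; lra).
replace (C * a / (S * P)) with (X * (a / S)) by (unfold X; field; lra).
replace (C * B / (S * P)) with (X * (B / S)) by (unfold X; field; lra).
assert (a / S <= 1) by (apply Rmult_le_reg_r with S; [lra|]; unfold Rdiv; rewrite Rmult_assoc, Rinv_l; lra).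
assert (B / S <= 1) by (apply Rmult_le_reg_r with S; [lra|]; unfold Rdiv; rewrite Rmult_assoc, Rinv_l; lra).
nra.
Qed.

Lemma wt_D S m L : 1 <= S -> Inv S m L ->
  wt S (Datatypes.S m) (DL L) <= (INR (2 * m + 1) + 2) * wt S m L.
Proof.
intros HS H. induction H as [|t L Ht HL IH]. unfold wt; simpl. lra.
change (DL (t::L)) with (Dt t ++ DL L). rewrite wt_app.
destruct t as [c j a b p]. destruct Ht as [Ha [Hb Hj]]. cbn [tc tj ta tb tp] in Ha, Hb, Hj.
change (wt S (Datatypes.S m) (Dt {| tc := c; tj := j; ta := a; tb := b; tp := p |})) with
 (Rabs (-(INR j * c)) / S^(Datatypes.S j - Datatypes.S m - 1) + (Rabs (c*a) / S^(Datatypes.S (Datatypes.S j) - Datatypes.S m - 1) + (Rabs (-(c*b))/S^(Datatypes.S (Datatypes.S j) - Datatypes.S m - 1) + 0))).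
replace (Datatypes.S j - Datatypes.S m - 1)%nat with (j - m - 1)%nat by lia.
replace (Datatypes.S (Datatypes.S j) - Datatypes.S m - 1)%nat with (Datatypes.S (j - m - 1)) by lia.
change (S ^ Datatypes.S (j - m - 1)) with (S * S ^ (j - m - 1)).
change (wt S m ({| tc := c; tj := j; ta := a; tb := b; tp := p |} :: L)) with
  (Rabs c / S ^ (j - m - 1) + wt S m L).
rewrite Rmult_plus_distr_l.
apply Rplus_le_compat; [|exact IH].
rewrite !Rabs_Ropp, !Rabs_mult, (Rabs_right (INR j)) by (apply Rle_ge, pos_INR).
rewrite (Rabs_right a) by lra.
apply real_aux; try lra.
- apply pow_lt; lra.
- split; [apply Rabs_pos|lra].
- apply Rabs_pos.
- split. apply pos_INR. apply le_INR. lia.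
Qed.


Lemma tev_bound (S : R) (m : nat) t v : 0 <= ta t -> (m + 1 <= tj t <= 2 * m + 1)%nat -> 0 < v <= S ->
  Rabs (tev t v) <= Rabs (tc t) / S ^ (tj t - m - 1) * S ^ m / v ^ (2 * m + 1).
Proof.
destruct t as [c j a b p]. unfold tev. cbn [tc tj ta tb tp]. intros Ha Hj Hv.
assert (H1 : Rabs (c * (/ v) ^ j * exp (- (a * / v)) * sin (b * / v + p)) <= Rabs c * (/ v) ^ j).
{ rewrite !Rabs_mult. rewrite (Rabs_right ((/v)^j)) by (apply Rle_ge, pow_le; left; apply Rinv_0_lt_compat; lra).
  rewrite (Rabs_right (exp _)) by (apply Rle_ge; left; apply exp_pos).
  assert (exp (- (a * / v)) <= 1).
  { rewrite <- exp_0. destruct (Req_dec (a * / v) 0) as [e|ne]. rewrite e, Ropp_0. lra.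
    left. apply exp_increasing. assert (0 <= a * / v) by (apply Rmult_le_pos; [lra|left; apply Rinv_0_lt_compat; lra]). lra. }
  assert (Rabs (sin (b * / v + p)) <= 1) by (apply Rabs_le; apply SIN_bound).
  assert (0 <= Rabs c * (/v)^j) by (apply Rmult_le_pos; [apply Rabs_pos| apply pow_le; left; apply Rinv_0_lt_compat; lra]).
  assert (0 <= exp (- (a * / v))) by (left; apply exp_pos).
  assert (0 <= Rabs (sin (b * / v + p))) by apply Rabs_pos.
  set (X := Rabs c * (/ v) ^ j) in *. set (E := exp (- (a * / v))) in *.
  set (Sn := Rabs (sin (b * / v + p))) in *.
  replace X with (X * 1 * 1) at 2 by ring.
  apply Rmult_le_compat; try lra. apply Rmult_le_pos; lra.
  apply Rmult_le_compat; lra. }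
eapply Rle_trans; [exact H1|].
set (e := (j - m - 1)%nat). set (d := (m - e)%nat).
assert (Em : S ^ m = S ^ e * S ^ d) by (rewrite <- pow_add; f_equal; unfold d, e; lia).
assert (E2 : v ^ (2 * m + 1) = v ^ j * v ^ d) by (rewrite <- pow_add; f_equal; unfold d, e; lia).
rewrite Em, E2.
assert (HSe : 0 < S ^ e) by (apply pow_lt; lra).
assert (Hvj : 0 < v ^ j) by (apply pow_lt; lra).
assert (Hvd : 0 < v ^ d) by (apply pow_lt; lra).
assert (Hdd : v ^ d <= S ^ d) by (apply pow_incr; lra).
rewrite <- Rinv_pow by lra.
replace (Rabs c / S ^ e * (S ^ e * S ^ d) / (v ^ j * v ^ d)) with (Rabs c * / v ^ j * (S ^ d / v ^ d)) by (field; lra).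
rewrite <- (Rmult_1_r (Rabs c * / v ^ j)) at 1.
apply Rmult_le_compat_l.
apply Rmult_le_pos; [apply Rabs_pos | left; apply Rinv_0_lt_compat; lra].
apply Rmult_le_reg_r with (v ^ d); [lra|]. unfold Rdiv. rewrite Rmult_assoc, Rinv_l by lra. lra.
Qed.

Lemma Fev_bound (S : R) (m : nat) L v : Inv S m L -> 0 < v <= S ->
  Rabs (Fev L v) <= wt S m L * S ^ m / v ^ (2 * m + 1).
Proof.
intros H Hv. induction H as [|t L Ht HL IH].
- unfold Fev, wt; simpl. rewrite Rabs_R0. unfold Rdiv. rewrite !Rmult_0_l. lra.
- change (Fev (t :: L) v) with (tev t v + Fev L v).
  change (wt S m (t :: L)) with (Rabs (tc t) / S ^ (tj t - m - 1) + wt S m L).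
  destruct Ht as [Ha [Hb Hj]].
  eapply Rle_trans. apply Rabs_triang.
  replace ((Rabs (tc t) / S ^ (tj t - m - 1) + wt S m L) * S ^ m / v ^ (2 * m + 1))
    with (Rabs (tc t) / S ^ (tj t - m - 1) * S ^ m / v ^ (2 * m + 1) + wt S m L * S ^ m / v ^ (2 * m + 1)) by (unfold Rdiv; ring).
  apply Rplus_le_compat; [apply tev_bound; lra || tauto|exact IH].
Qed.

Fixpoint Nc (m : nat) : R := match m with O => 2 | Datatypes.S k => (INR (2 * k + 1) + 2) * Nc k end.

Lemma Nc_pos m : 0 < Nc m.
Proof. induction m as [|m IH]; simpl Nc. lra. apply Rmult_lt_0_compat; [|exact IH]. apply Rplus_le_lt_0_compat; [apply pos_INR|lra]. Qed.

Lemma wt_nonneg S m L : 1 <= S -> 0 <= wt S m L.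
Proof.
intros HS. induction L as [|t L IH]. unfold wt; simpl; lra.
change (wt S m (t :: L)) with (Rabs (tc t) / S ^ (tj t - m - 1) + wt S m L).
assert (0 < S ^ (tj t - m - 1)) by (apply pow_lt; lra).
assert (0 <= Rabs (tc t) / S ^ (tj t - m - 1)) by (apply Rmult_le_pos; [apply Rabs_pos| left; apply Rinv_0_lt_compat; lra]).
lra.
Qed.

Lemma iter_props S L m : 1 <= S -> Inv S 0 L -> wt S 0 L <= 2 ->
  Inv S m (Nat.iter m DL L) /\ wt S m (Nat.iter m DL L) <= Nc m.
Proof.
intros HS HI Hw. induction m as [|m [IH1 IH2]]. simpl. tauto.
split. apply Inv_D; exact IH1.
change (Nat.iter (Datatypes.S m) DL L) with (DL (Nat.iter m DL L)).
eapply Rle_trans. apply wt_D; auto. simpl Nc.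
apply Rmult_le_compat_l; [apply Rplus_le_le_0_compat; [apply pos_INR|lra]| exact IH2].
Qed.

Lemma part_bound (F : R -> R) L S m u :
  (forall v, 0 < v -> Derive F v = Fev L v) -> Inv S 0 L -> wt S 0 L <= 2 -> 1 <= u <= S ->
  Rabs (Derive_n F (Datatypes.S m) u) <= Nc m * S ^ m / u ^ (2 * m + 1).
Proof.
intros HD HI Hw Hu.
replace (Datatypes.S m) with (m + 1)%nat by lia.
rewrite <- Derive_n_comp.
rewrite (Derive_n_ext_loc _ (Fev L)).
2:{ exists (mkposreal 1 Rlt_0_1). intros y Hy. simpl. apply HD.
    unfold ball in Hy; simpl in Hy. unfold AbsRing_ball, abs, minus, plus, opp in Hy; simpl in Hy.
    apply Rabs_def2 in Hy. lra. }
rewrite Derive_n_Fev by lra.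
destruct (iter_props S L m) as [H1 H2]; try lra; auto.
eapply Rle_trans. apply (Fev_bound S m); [exact H1| lra].
unfold Rdiv. rewrite !Rmult_assoc. apply Rmult_le_compat_r; auto.
apply Rmult_le_pos. apply pow_le; lra. left; apply Rinv_0_lt_compat, pow_lt; lra.
Qed.

Theorem lemma8 : forall nu : nat, (1 <= nu)%nat ->
  exists K : R, 0 < K /\
    forall (u : R) (s : C), Re s = 1 -> 1 <= u -> u < Cmod s ->
      Cmod (dG nu u s) <= K * Cmod s ^ (nu - 1) / u ^ (2 * nu - 1).
Proof.
intros nu Hnu. destruct nu as [|m]; [lia|].
exists (2 * Nc m). split. pose proof (Nc_pos m); lra.
intros u s Hre Hu Hus.
replace (Datatypes.S m - 1)%nat with m by lia.
replace (2 * Datatypes.S m - 1)%nat with (2 * m + 1)%nat by lia.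
set (S := Cmod s). set (b := Im s).
assert (HbS : Rabs b <= S).
{ pose proof (Rmax_Cmod s) as H. unfold S, b. eapply Rle_trans; [|exact H]. apply Rmax_r. }
assert (HS : 1 <= S) by (unfold S; lra).
set (Lre := mkT (-1) 1 0 0 (PI/2) :: mkT 1 1 1 b (PI/2) :: nil).
set (Lim := mkT (-1) 1 1 b 0 :: nil).
assert (Bre : Rabs (Derive_n (fun v => G_re v s) (Datatypes.S m) u) <= Nc m * S ^ m / u ^ (2 * m + 1)).
{ apply (part_bound _ Lre); [| | |unfold S; lra].
  - intros v Hv. unfold G_re.
    rewrite (Derive_Gpart (fun t => 1 - exp (- (t * Re s)) * cos (t * Im s))).
    + unfold Fev, tev, Lre; simpl. rewrite !sin_PI2_shift.
      rewrite !Rmult_0_l, Ropp_0, exp_0, cos_0, Hre.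
      replace (1 / v * 1) with (1 * / v) by (field; lra).
      replace (1 / v * Im s) with (b * / v) by (unfold b; field; lra).
      field. lra.
    + intros t. auto_derive. auto.
    + rewrite !Rmult_0_l, Ropp_0, exp_0, cos_0. ring.
    + lra.
  - unfold Inv, Lre. repeat apply Forall_cons; try apply Forall_nil; simpl; (repeat split; try lra; try lia).
    rewrite Rabs_R0; lra.
  - unfold wt, Lre; simpl. rewrite (Rabs_left (-1)) by lra; rewrite Rabs_R1; lra. }
assert (Bim : Rabs (Derive_n (fun v => G_im v s) (Datatypes.S m) u) <= Nc m * S ^ m / u ^ (2 * m + 1)).
{ apply (part_bound _ Lim); [| | |unfold S; lra].
  - intros v Hv. unfold G_im.
    rewrite (Derive_Gpart (fun t => exp (- (t * Re s)) * sin (t * Im s))).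
    + unfold Fev, tev, Lim; simpl. rewrite Hre.
      replace (1 / v * 1) with (1 * / v) by (field; lra).
      replace (1 / v * Im s) with (b * / v + 0) by (unfold b; field; lra).
      field. lra.
    + intros t. auto_derive. auto.
    + rewrite !Rmult_0_l, sin_0. ring.
    + lra.
  - unfold Inv, Lim. repeat apply Forall_cons; try apply Forall_nil; simpl; (repeat split; try lra; try lia).
  - unfold wt, Lim; simpl. rewrite (Rabs_left (-1)) by lra; lra. }
unfold dG.
eapply Rle_trans. apply Cmod_2Rmax. simpl fst; simpl snd.
set (B := Nc m * S ^ m / u ^ (2 * m + 1)) in *.
assert (HM : Rmax (Rabs (Derive_n (fun v => G_re v s) (Datatypes.S m) u)) (Rabs (Derive_n (fun v => G_im v s) (Datatypes.S m) u)) <= B)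
  by (apply Rmax_lub; auto).
assert (Hs2 : sqrt 2 <= 2).
{ rewrite <- (sqrt_square 2) at 2 by lra. apply sqrt_le_1_alt. lra. }
assert (HB : 0 <= B) by (eapply Rle_trans; [apply Rabs_pos| exact Bre]).
assert (0 <= sqrt 2) by apply sqrt_pos.
replace (2 * Nc m * S ^ m / u ^ (2 * m + 1)) with (2 * B) by (unfold B, Rdiv; ring).
apply Rle_trans with (sqrt 2 * B). apply Rmult_le_compat_l; auto.
apply Rmult_le_compat_r; auto.
Qed.
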